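(* Let $W$ be the Witt algebra, the complex Lie algebra with basis $\{x_n\mid n\in\mathbb{Z}\}$ and bracket $[x_m,x_n]=(n-m)x_{m+n}$. Any left-symmetric algebra structure on the underlying vector space of $W$ whose commutator $xy-yx$ equals the bracket of $W$ is simple, i.e. has no ideals other than $0$ and itself.
   Context: A left-symmetric algebra is a vector space with bilinear product satisfying $(xy)z-x(yz)=(yx)z-y(xz)$ for all $x,y,z$. An ideal is a subspace $I$ with $AI\subseteq I$ and $IA\subseteq I$. *)

(* Defs.v *)
From mathcomp Require Import all_boot all_order all_algebra.
From mathcomp Require Import complex.
From mathcomp Require Import Rstruct.
From Stdlib Require Import Reals.

Set Implicit Arguments.
Unset Strict Implicit.
Unset Printing Implicit Defensive.

Import Order.TTheory GRing.Theory Num.Theory.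
Import ComplexField.
Local Open Scope ring_scope.

Definition C : fieldType := (complex R : fieldType).

Definition lin_indep (V : lmodType C) (x : int -> V) : Prop :=
  forall (s : seq int) (c : int -> C), uniq s ->
    \sum_(n <- s) c n *: x n = 0 -> forall n, n \in s -> c n = 0.

Definition spanning (V : lmodType C) (x : int -> V) : Prop :=
  forall v : V, exists (s : seq int) (c : int -> C), v = \sum_(n <- s) c n *: x n.

Definition is_basis (V : lmodType C) (x : int -> V) : Prop :=
  lin_indep x /\ spanning x.

Definition bilinear_prod (V : lmodType C) (mul : V -> V -> V) : Prop :=
  (forall (a : C) (u v w : V), mul (a *: u + v) w = a *: mul u w + mul v w) /\
  (forall (a : C) (u v w : V), mul w (a *: u + v) = a *: mul w u + mul w v).

Definition left_symmetric (V : lmodType C) (mul : V -> V -> V) : Prop :=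
  forall x y z : V,
    mul (mul x y) z - mul x (mul y z) = mul (mul y x) z - mul y (mul x z).

(* (V, x) is the Witt algebra bracket realized by the commutator of mul:
   [x_m, x_n] = (n - m) x_{m+n}, i.e. xy - yx equals the Witt bracket
   (on basis vectors; by bilinearity this is the same as on all of V). *)
Definition commutator_is_witt (V : lmodType C) (x : int -> V)
    (mul : V -> V -> V) : Prop :=
  forall m n : int, mul (x m) (x n) - mul (x n) (x m) = (n - m)%:~R *: x (m + n).

Definition is_ideal (V : lmodType C) (mul : V -> V -> V) (I : V -> Prop) : Prop :=
  [/\ I 0,
      (forall u v, I u -> I v -> I (u + v)),
      (forall (a : C) u, I u -> I (a *: u)),
      (forall a u, I u -> I (mul a u)) &
      (forall a u, I u -> I (mul u a))].

Definition simple_alg (V : lmodType C) (mul : V -> V -> V) : Prop :=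
  forall I : V -> Prop, is_ideal mul I ->
    (forall v, I v -> v = 0) \/ (forall v, I v).

(* Main.v *)
Require Import Defs.
From mathcomp Require Import all_boot all_order all_algebra.
From mathcomp Require Import complex Rstruct zify ring.
From Stdlib Require Import Classical.
Local Open Scope ring_scope.
Import GRing.Theory Num.Theory.

Lemma int_nz_C (k : int) : (k%:~R : Defs.C) = 0 -> k = 0.
Proof.
change ((k%:~R : complex Rdefinitions.R) = 0 -> k = 0). move/eqP. rewrite intr_eq0. by move/eqP.
Qed.

Theorem proposition2p4 (V : lmodType C) (x : int -> V) (mul : V -> V -> V) :
  is_basis x ->
  bilinear_prod mul ->
  left_symmetric mul ->
  commutator_is_witt x mul ->
  simple_alg mul.
Proof.
move=> [li sp] [bl br] _ wit I [I0 ID IZ IL IR].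
have mulr0_ w : mul w 0 = 0.
  have h := br 1 0 0 w; rewrite !scale1r addr0 in h.
  by apply: (@addrI _ (mul w 0)); rewrite addr0 -h.
have mul0r_ w : mul 0 w = 0.
  have h := bl 1 0 0 w; rewrite !scale1r addr0 in h.
  by apply: (@addrI _ (mul 0 w)); rewrite addr0 -h.
have mulr_sum w s (c : int -> C) :
    mul w (\sum_(n <- s) c n *: x n) = \sum_(n <- s) c n *: mul w (x n).
  elim: s => [|a s IH]; first by rewrite !big_nil mulr0_.
  by rewrite !big_cons br IH.
have mull_sum w s (c : int -> C) :
    mul (\sum_(n <- s) c n *: x n) w = \sum_(n <- s) c n *: mul (x n) w.
  elim: s => [|a s IH]; first by rewrite !big_nil mul0r_.
  by rewrite !big_cons bl IH.
have IN u : I u -> I (- u) by move=> Iu; rewrite -scaleN1r; apply: IZ.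
have IB u v : I u -> I v -> I (u - v) by move=> Iu Iv; apply: ID => //; apply: IN.
have Ibr a u : I u -> I (mul a u - mul u a) by move=> Iu; apply: IB; [apply: IL|apply: IR].
have Iunscale (a : C) u : a != 0 -> I (a *: u) -> I u.
  move=> a0 Iau; have := IZ a^-1 _ Iau; by rewrite scalerA mulVf // scale1r.
have step n k : I (x n) -> k != n + n -> I (x k).
  move=> In hk; have := Ibr (x (k - n)) (x n) In; rewrite wit subrK.
  apply: Iunscale; apply/eqP => /int_nz_C h; move/eqP: hk; apply; lia.
have all_x n : I (x n) -> forall k, I (x k).
  move=> In k.
  have Ix0 : I (x 0).
    case: (eqVneq n 0) => [<-|n0] //; apply: (step n) => //; apply/eqP; lia.
  case: (eqVneq k 0) => [->|k0] //; apply: (step 0) => //; by rewrite addr0.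
have key : forall N s (c : int -> C), (size s <= N)%N -> uniq s ->
    I (\sum_(n <- s) c n *: x n) -> \sum_(n <- s) c n *: x n != 0 ->
    exists n, I (x n).
  elim => [|N IH] [|n0 s] c //=; try by rewrite big_nil eqxx.
  move=> hs /andP[n0s us] Iv v0.
  pose c' := fun n : int => c n * (n - n0)%:~R.
  have ew : \sum_(n <- n0 :: s) c' n *: x n =
      (mul (x 0) (\sum_(n <- n0 :: s) c n *: x n)
       - mul (\sum_(n <- n0 :: s) c n *: x n) (x 0))
      - n0%:~R *: \sum_(n <- n0 :: s) c n *: x n.
    rewrite mulr_sum mull_sum -sumrB scaler_sumr -sumrB; apply: eq_bigr => n _.
    rewrite -scalerBr wit subr0 add0r !scalerA -scalerBl /c'; congr (_ *: _).
    rewrite intrB; ring.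
  have Iw : I (\sum_(n <- s) c' n *: x n).
    move: ew; rewrite big_cons /c' subrr mulr0 scale0r add0r => ->.
    apply: IB; first by apply: Ibr.
    by apply: IZ.
  case: (eqVneq (\sum_(n <- s) c' n *: x n) 0) => [w0|w0]; last first.
    by apply: (IH s c') => //.
  have cz n : n \in s -> c n = 0.
    move=> ns; have := li s c' us w0 n ns; rewrite /c' => /eqP.
    rewrite mulf_eq0 => /orP[/eqP //|/eqP/int_nz_C h].
    have e : n0 = n by apply/eqP; rewrite eq_sym -subr_eq0 h.
    by move: n0s; rewrite e ns.
  have ev : \sum_(n <- n0 :: s) c n *: x n = c n0 *: x n0.
    by rewrite big_cons big1_seq ?addr0 // => n /andP[_ ns]; rewrite cz // scale0r.
  exists n0; move: Iv v0; rewrite ev => Iv v0.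
  apply: (Iunscale (c n0)) => //; apply/eqP => c0; move/eqP: v0; apply.
  by rewrite c0 scale0r.
have Isum s (c : int -> C) : (forall n, I (x n)) -> I (\sum_(n <- s) c n *: x n).
  move=> Ix; elim: s => [|a s IHs]; first by rewrite big_nil.
  by rewrite big_cons; apply: ID => //; apply: IZ.
case: (classic (exists v, I v /\ v <> 0)) => [[v [Iv v0]]|H]; [right|left].
  have [s [c ev]] := sp v.
  have ev' : v = \sum_(n <- undup s) (c n *+ count_mem n s) *: x n.
    rewrite ev -big_undup_iterop_count; apply: eq_bigr => n _.
    by rewrite Monoid.iteropE iter_addr_0 scalerMnl.
  have [n In] : exists n, I (x n).
    apply: (key (size (undup s)) (undup s) (fun n => c n *+ count_mem n s)) => //.
    - exact: undup_uniq.
    - by rewrite -ev'.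
    - by rewrite -ev'; apply/eqP.
  move=> w; have [s' [c' ->]] := sp w; apply: Isum; exact: all_x In.
move=> v Iv; apply: NNPP => hv; apply: H; by exists v.
Qed.
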